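(* Let $K$ be a field and $X=\{y_{ij}\mid i,j\in\mathbb N,\ i\ge j\}$. For all $b_0,b_1\in K[X]$ the set $(\mathrm{Inc}(\mathbb N)b_0)\times(\mathrm{Inc}(\mathbb N)b_1)$ is the union of finitely many $\mathrm{Inc}(\mathbb N)$-orbits under the diagonal action.
   Context: $\mathrm{Inc}(\mathbb N)$ is the monoid of strictly increasing maps $\pi:\mathbb N\to\mathbb N$, acting on $K[X]$ by ring homomorphisms with $\pi y_{ij}=y_{\pi(i)\pi(j)}$; the diagonal action on $K[X]\times K[X]$ is $\pi(f,h)=(\pi f,\pi h)$, and an orbit is a set $\{\pi(f,h)\mid \pi\in\mathrm{Inc}(\mathbb N)\}$. *)

(* Defs.v *)
From HB Require Import structures.
From mathcomp Require Import all_boot all_order all_algebra.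
From mathcomp Require Import finmap.
From mathcomp Require Import monalg.

Set Implicit Arguments.
Unset Strict Implicit.
Unset Printing Implicit Defensive.

Import GRing.Theory.
Local Open Scope ring_scope.

(* The index set of the variables: pairs (i, j) of naturals with i >= j.
   The element (i, j) stands for the variable y_ij. *)
Definition Var : Type := {p : nat * nat | (p.2 <= p.1)%N}.

Definition KX (K : fieldType) := {malg K[{cmonom Var}]}.

Definition yvar (K : fieldType) (v : Var) : KX K := << ucm v >>.

Record Inc := MkInc {
  inc_fun :> nat -> nat;
  inc_mono : forall i j : nat, (i < j)%N -> (inc_fun i < inc_fun j)%N
}.

Lemma inc_le (pi : Inc) (i j : nat) : (j <= i)%N -> (pi j <= pi i)%N.
Proof.
rewrite leq_eqVlt => /orP [/eqP -> //|/inc_mono/ltnW //].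
Qed.

Definition inc_var (pi : Inc) (v : Var) : Var :=
  exist _ (pi (val v).1, pi (val v).2) (inc_le pi (valP v)).

(* The action of pi on K[X]: the K-algebra homomorphism (substitution)
   sending each variable y_ij to y_{pi(i) pi(j)}. *)
Definition inc_act (K : fieldType) (pi : Inc) (f : KX K) : KX K :=
  mmap (fun c : K => c%:MP : KX K)
       (fun m : {cmonom Var} =>
          \prod_(v <- finsupp (cmonom_val m)) yvar K (inc_var pi v) ^+ (m v))
       f.

Definition orbit1 (K : fieldType) (f : KX K) : KX K -> Prop :=
  fun g => exists pi : Inc, g = inc_act pi f.

Definition orbit2 (K : fieldType) (p : KX K * KX K) : KX K * KX K -> Prop :=
  fun q => exists pi : Inc, q = (inc_act pi p.1, inc_act pi p.2).

(* Main.v *)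
From HB Require Import structures.
Require Import Defs.
From mathcomp Require Import all_boot all_order all_algebra.
From mathcomp Require Import finmap monalg.
From mathcomp Require Import zify.
Set Implicit Arguments. Unset Strict Implicit. Unset Printing Implicit Defensive.

Section Comb.
Variable M : nat.

Definition okf (a : nat -> nat) : bool :=
  all (fun i => a i < 2 * M) (iota 0 M) &&
  all (fun i => (i.+1 < M) ==> (a i < a i.+1)) (iota 0 M).

Definition extf (a : nat -> nat) (i : nat) : nat :=
  if okf a then (if i < M then a i else i + 2 * M) else i.

Lemma chain_lt (a : nat -> nat) : (forall k, k.+1 < M -> a k < a k.+1) ->
  forall i j, i < j -> j < M -> a i < a j.
Proof.
move=> H i; elim=> // j IH; rewrite ltnS leq_eqVlt => /orP [/eqP -> hj|hij hj].
  by apply: H.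
apply: ltn_trans (IH hij (ltnW hj)) _; exact: H.
Qed.

Lemma extf_mono a i j : i < j -> extf a i < extf a j.
Proof.
rewrite /extf; case ok: (okf a) => // hij.
move: ok => /andP [/allP h1 /allP h2].
have hb : forall k, k < M -> a k < 2 * M by move=> k hk; apply: h1; rewrite mem_iota.
have hc : forall k, k.+1 < M -> a k < a k.+1.
  move=> k hk; have hk' : k \in iota 0 M by rewrite mem_iota; lia.
  by move: (h2 k hk') => /implyP; apply.
case: (ltnP j M) => hj.
  by rewrite (ltn_trans hij hj); apply: chain_lt.
case: (ltnP i M) => hi.
  have := hb i hi; lia.
lia.
Qed.

Definition mkI (a : nat -> nat) : Inc := MkInc (@extf_mono a).

Lemma mkIE a i : okf a -> i < M -> mkI a i = a i.
Proof. by move=> ok hi; rewrite /= /extf ok hi. Qed.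
End Comb.

Fixpoint allseqs (n N : nat) : seq (seq nat) :=
  if n is n'.+1 then [seq x :: t | x <- iota 0 N, t <- allseqs n' N] else [:: [::]].

Lemma allseqsP n N t : size t = n -> all (fun x => x < N) t -> t \in allseqs n N.
Proof.
elim: n t => [|n IH] [|x t] //= [hs] /andP [hx ht].
apply/allpairsP; exists (x, t) => /=; split => //.
  by rewrite mem_iota.
exact: IH.
Qed.

Section Decomp.
Variables (M B : nat) (s : seq nat).
Hypothesis s_sorted : sorted ltn s.
Hypothesis s_size : size s <= 2 * M.
Hypothesis s_lt : forall x, x \in s -> x < B.

Lemma index_lt x y : x \in s -> y \in s -> x < y -> index x s < index y s.
Proof.
move=> xs ys xy; rewrite ltnNge; apply/negP => h.
have ss : sorted leq s by apply: sub_sorted s_sorted => a b /ltnW.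
have := sorted_leq_index leq_trans leqnn ss y x ys xs h; lia.
Qed.

Definition tauf (k : nat) : nat := if k < size s then nth 0 s k else B + k.

Lemma tauf_mono i j : i < j -> tauf i < tauf j.
Proof.
rewrite /tauf => hij; case: (ltnP j (size s)) => hj.
  rewrite (ltn_trans hij hj).
  by apply: (sorted_ltn_nth ltn_trans 0 s_sorted) => //; rewrite inE // (ltn_trans hij hj).
case: (ltnP i (size s)) => hi /=.
  move: (s_lt (mem_nth 0 hi)) => h; exact: leq_trans h (leq_addr _ _).
by rewrite ltn_add2l.
Qed.

Definition tauI : Inc := MkInc tauf_mono.

Lemma piece (rho : Inc) : (forall i, i < M -> rho i \in s) ->
  let t := [seq index (rho i) s | i <- iota 0 M] in
  [/\ t \in allseqs M (2 * M), okf M (nth 0 t) &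
      forall i, i < M -> tauI (nth 0 t i) = rho i].
Proof.
move=> hin t.
have nt : forall i, i < M -> nth 0 t i = index (rho i) s.
  by move=> i hi; rewrite /t (nth_map 0) ?size_iota // nth_iota.
have ilt : forall i, i < M -> index (rho i) s < 2 * M.
  by move=> i hi; apply: leq_trans s_size; rewrite index_mem; apply: hin.
split.
- apply: allseqsP; first by rewrite size_map size_iota.
  apply/allP => x /mapP [i]; rewrite mem_iota => /andP [_ hi] ->.
  exact: ilt.
- apply/andP; split; apply/allP => i; rewrite mem_iota => /andP [_ hi].
    by rewrite nt // ilt.
  apply/implyP => hi1; rewrite !nt //; apply: index_lt; try apply: hin => //.
  exact: inc_mono.
- move=> i hi; rewrite /= /tauf nt // index_mem hin //.
  by rewrite nth_index // hin.
Qed.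
End Decomp.

Lemma decomp M (pi sigma : Inc) : exists t0 t1 (tau : Inc),
  [/\ t0 \in allseqs M (2 * M), okf M (nth 0 t0) &
      (forall i, i < M -> tau (nth 0 t0 i) = pi i)] /\
  [/\ t1 \in allseqs M (2 * M), okf M (nth 0 t1) &
      (forall i, i < M -> tau (nth 0 t1 i) = sigma i)].
Proof.
pose B := pi M + sigma M.
pose s := [seq x <- iota 0 B | has (fun i => (pi i == x) || (sigma i == x)) (iota 0 M)].
have s_sorted : sorted ltn s by apply: sorted_filter; [exact: ltn_trans|exact: iota_ltn_sorted].
have s_lt : forall x, x \in s -> x < B by move=> x; rewrite mem_filter mem_iota => /andP [_ /andP [_ ]].
have s_size : size s <= 2 * M.
  have -> : 2 * M = size ([seq pi i | i <- iota 0 M] ++ [seq sigma i | i <- iota 0 M]).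
    by rewrite size_cat !size_map size_iota mul2n addnn.
  apply: uniq_leq_size; first by apply: filter_uniq; exact: iota_uniq.
  move=> x; rewrite mem_filter => /andP [/hasP [i]]; rewrite mem_iota => /andP [_ hi] /orP [/eqP <-|/eqP <-] _;
    rewrite mem_cat; apply/orP; [left|right]; apply/mapP; exists i => //; by rewrite mem_iota.
have pin : forall i, i < M -> pi i \in s.
  move=> i hi; rewrite mem_filter mem_iota /=; apply/andP; split.
    by apply/hasP; exists i; rewrite ?mem_iota ?eqxx.
  apply: leq_trans (inc_mono pi hi) (leq_addr _ _).
have sin : forall i, i < M -> sigma i \in s.
  move=> i hi; rewrite mem_filter mem_iota /=; apply/andP; split.
    by apply/hasP; exists i; rewrite ?mem_iota ?eqxx ?orbT.
  apply: leq_trans (inc_mono sigma hi) (leq_addl _ _).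
have [a0 b0 c0] := piece s_sorted s_size s_lt pin.
have [a1 b1 c1] := piece s_sorted s_size s_lt sin.
exists [seq index (pi i) s | i <- iota 0 M], [seq index (sigma i) s | i <- iota 0 M]. eexists. split. exact: (And3 a0 b0 c0). exact: (And3 a1 b1 c1).
Qed.

Import GRing.Theory.
Local Open Scope ring_scope.
Local Open Scope fset_scope.

Section Alg.
Variable K : fieldType.

Definition hm (pi : Inc) (m : {cmonom Var}) : KX K :=
  \prod_(v <- finsupp (cmonom_val m)) yvar K (inc_var pi v) ^+ (m v).

Lemma hmEw pi m (d : {fset Var}) : finsupp (cmonom_val m) `<=` d ->
  hm pi m = \prod_(v <- d) yvar K (inc_var pi v) ^+ (m v).
Proof.
move=> le; rewrite /hm (big_fset_incl _ le) //= => x _ xn.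
have /eqP -> : m x == 0%N by rewrite cmE_eq0.
by rewrite expr0.
Qed.

Lemma hm_mmorph pi : mmorphism (hm pi).
Proof.
split.
  move=> m1 m2 /=.
  set d := finsupp (cmonom_val m1) `|` finsupp (cmonom_val m2).
  have h1 : finsupp (cmonom_val m1) `<=` d by rewrite fsubsetUl.
  have h2 : finsupp (cmonom_val m2) `<=` d by rewrite fsubsetUr.
  rewrite (hmEw pi h1) (hmEw pi h2) (@hmEw pi _ d); last by rewrite mdomD.
  rewrite -big_split /=; apply: eq_bigr => v _; by rewrite cmM exprD.
by rewrite /hm mdom1 big_nil.
Qed.

HB.instance Definition _ (pi : Inc) := isMultiplicative.Build {cmonom Var} (KX K) (hm pi) (hm_mmorph pi).

Lemma inc_actE pi f : inc_act pi f = mmap (@malgC _ K) (hm pi) f.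
Proof. by []. Qed.

Lemma inc_act_rmorph pi : multiplicative (@inc_act K pi).
Proof. exact: (@mmap_is_multiplicative _ K (KX K) (@malgC _ K) (hm pi)). Qed.

Lemma inc_act_additive pi : additive (@inc_act K pi).
Proof. by move=> x y; rewrite !inc_actE raddfB. Qed.

HB.instance Definition _ (pi : Inc) :=
  GRing.isAdditive.Build (KX K) (KX K) (@inc_act K pi) (inc_act_additive pi).
HB.instance Definition _ (pi : Inc) :=
  GRing.isMultiplicative.Build (KX K) (KX K) (@inc_act K pi) (inc_act_rmorph pi).
End Alg.

Definition compinc (tau pi : Inc) : Inc :=
  MkInc (fun i j (h : (i < j)%N) => inc_mono tau (inc_mono pi h)).

Lemma inc_var_comp tau pi v : inc_var tau (inc_var pi v) = inc_var (compinc tau pi) v.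
Proof. exact: val_inj. Qed.

Section Alg2.
Variable K : fieldType.

Lemma inc_act_yvar tau v : inc_act tau (yvar K v) = yvar K (inc_var tau v).
Proof.
rewrite inc_actE /yvar mmapU /hm mdomU big_seq_fset1 cmUU expr1.
by rewrite -[X in X * _ = _]/(1%:MP) mpolyC1E mul1r.
Qed.

Lemma inc_act_comp tau pi (f : KX K) :
  inc_act tau (inc_act pi f) = inc_act (compinc tau pi) f.
Proof.
rewrite [inc_act pi f]inc_actE mmapE [inc_act (compinc _ _) f]inc_actE mmapE.
rewrite raddf_sum; apply: eq_bigr => m _.
change (inc_act tau ((f@_m)%:MP * hm K pi m) = (f@_m)%:MP * hm K (compinc tau pi) m).
rewrite rmorphM /= [inc_act tau _]inc_actE mmapC; congr (_ * _).
rewrite /hm rmorph_prod; apply: eq_bigr => v _.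
by rewrite rmorphXn /= inc_act_yvar inc_var_comp.
Qed.
End Alg2.

Section Local.
Variable K : fieldType.
Definition bnd (f : KX K) : nat :=
  \max_(m <- msupp f) \max_(v <- finsupp (cmonom_val m)) (val v).1.+1.

Lemma inc_act_local (pi rho : Inc) (f : KX K) :
  (forall i, (i < bnd f)%N -> pi i = rho i) -> inc_act pi f = inc_act rho f.
Proof.
move=> H; rewrite [LHS]inc_actE [RHS]inc_actE /mmap.
apply: eq_big_seq => m mS; apply: congr1.
rewrite /hm; apply: eq_big_seq => v vS.
apply: (congr1 (fun w => yvar K w ^+ m v)); apply: val_inj.
have h1 : ((val v).1 < bnd f)%N.
  apply: (@bigmaxn_sup_seq _ _ m) => //.
  by apply: (@bigmaxn_sup_seq _ _ v).
have h2 : ((val v).2 < bnd f)%N by apply: leq_ltn_trans h1; exact: (valP v).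
by rewrite /inc_var /= !H.
Qed.
End Local.

Theorem lemma3p4 (K : fieldType) (b0 b1 : KX K) :
  exists s : seq (KX K * KX K),
    forall q : KX K * KX K,
      (orbit1 b0 q.1 /\ orbit1 b1 q.2) <->
      (exists2 p, p \in s & orbit2 p q).
Proof.
pose M := maxn (bnd b0) (bnd b1).
exists [seq (inc_act (mkI M (nth 0%N t0)) b0, inc_act (mkI M (nth 0%N t1)) b1) | t0 <- allseqs M (2 * M), t1 <- allseqs M (2 * M)].
have hM0 : (bnd b0 <= M)%N by apply: leq_maxl.
have hM1 : (bnd b1 <= M)%N by apply: leq_maxr.
clearbody M.
move=> [q1 q2] /=; split.
- move=> [[pi ->] [sigma ->]].
  have [t0 [t1 [tau [[h0 o0 e0] [h1 o1 e1]]]]] := decomp M pi sigma.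
  exists (inc_act (mkI M (nth 0%N t0)) b0, inc_act (mkI M (nth 0%N t1)) b1).
    by apply: (allpairs_f (fun t0 t1 => (inc_act (mkI M (nth 0%N t0)) b0, inc_act (mkI M (nth 0%N t1)) b1)) h0 h1).
  exists tau.
  have E0 := inc_act_comp tau (mkI M (nth 0%N t0)) b0.
  have E1 := inc_act_comp tau (mkI M (nth 0%N t1)) b1.
  apply: (f_equal2 pair).
    transitivity (inc_act (compinc tau (mkI M (nth 0%N t0))) b0); last exact: (esym E0).
    apply: inc_act_local => i hi.
    have hiM : (i < M)%N by apply: leq_trans hi hM0.
    change (pi i = tau (mkI M (nth 0%N t0) i)).
    rewrite (@mkIE M _ i o0 hiM); exact: (esym (e0 i hiM)).
  transitivity (inc_act (compinc tau (mkI M (nth 0%N t1))) b1); last exact: (esym E1).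
  apply: inc_act_local => i hi.
  have hiM : (i < M)%N by apply: leq_trans hi hM1.
  change (sigma i = tau (mkI M (nth 0%N t1) i)).
  rewrite (@mkIE M _ i o1 hiM); exact: (esym (e1 i hiM)).
- move=> [p /allpairsP [[t0 t1] [ht0 ht1 ->]] [tau E]].
  case: E => -> ->; split.
    exists (compinc tau (mkI M (nth 0%N t0))); exact: (inc_act_comp tau _ b0).
  exists (compinc tau (mkI M (nth 0%N t1))); exact: (inc_act_comp tau _ b1).
Qed.
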